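(* Let $\pi_1=(a_1,b_1,c_1,d_1)$ and $\pi_2=(a_2,b_2,c_2,d_2)$ be a chainable pair of patterns. Then $$\mathbf{S}_{\pi_1}\mathbf{S}_{\pi_2}=r(\pi_1,\pi_2)\,\mathbf{S}_{\pi_1*\pi_2}.$$
   Context: A pattern is a tuple $\pi=(a,b,c,d)$ of positive integers and $\mathbf{S}_\pi:=\mathbf{I}_a\otimes\mathbf{1}_{b\times c}\otimes\mathbf{I}_d\in\{0,1\}^{abd\times acd}$, where $\mathbf{I}_k$ is the identity, $\mathbf{1}_{p\times q}$ the all-ones matrix and $\otimes$ the Kronecker product. $\pi_1,\pi_2$ are chainable if $a_1c_1/a_2=b_2d_2/d_1$, this common value (denoted $r(\pi_1,\pi_2)$) is an integer, $a_1\mid a_2$ and $d_2\mid d_1$. Then $\pi_1*\pi_2:=(a_1,\,b_1d_1/d_2,\,a_2c_2/a_1,\,d_2)$. *)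

(* Defs.v *)
(* Kronecker product: [tensmx] ("A *t B") from
   mathcomp-real-closed's mxtens.v (standard Kronecker, row index i*p+k). *)
From mathcomp Require Import all_boot all_algebra.
From mathcomp Require Import mxtens.
Set Implicit Arguments. Unset Strict Implicit. Unset Printing Implicit Defensive.
Import GRing.Theory.
Local Open Scope ring_scope.

Record pattern := Pattern { pa : nat; pb : nat; pc : nat; pd : nat }.

Definition pattern_pos (p : pattern) : Prop :=
  (0 < pa p)%N /\ (0 < pb p)%N /\ (0 < pc p)%N /\ (0 < pd p)%N.

Definition Smx (p : pattern) : 'M[int]_(pa p * pb p * pd p, pa p * pc p * pd p) :=
  ((1%:M : 'M[int]_(pa p)) *t (const_mx 1 : 'M[int]_(pb p, pc p)))
    *t (1%:M : 'M[int]_(pd p)).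

(* chainable: a1 c1 / a2 = b2 d2 / d1, this common value is an integer,
   a1 | a2 and d2 | d1. *)
Definition chainable (p1 p2 : pattern) : Prop :=
  [/\ (pa p2 %| pa p1 * pc p1)%N, (pd p1 %| pb p2 * pd p2)%N,
      (pa p1 * pc p1 %/ pa p2 = pb p2 * pd p2 %/ pd p1)%N,
      (pa p1 %| pa p2)%N & (pd p2 %| pd p1)%N].

Definition rval (p1 p2 : pattern) : nat := (pa p1 * pc p1 %/ pa p2)%N.

Definition pchain (p1 p2 : pattern) : pattern :=
  Pattern (pa p1) (pb p1 * pd p1 %/ pd p2) (pa p2 * pc p2 %/ pa p1) (pd p2).

(* Main.v *)
Require Import Defs.
From mathcomp Require Import all_boot all_algebra.
From mathcomp Require Import mxtens.
From mathcomp Require Import zify.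
Import GRing.Theory.
Local Open Scope ring_scope.

Local Open Scope nat_scope.

Lemma cnt_mod d t q : t < d -> \sum_(0 <= m < q*d) (m %% d == t : nat) = q.
Proof.
move=> ht; elim: q => [|q IH]; first by rewrite mul0n big_geq.
rewrite mulSn addnC (big_cat_nat (n:=q*d)) //= ?leq_addr // IH.
rewrite -{1}(add0n (q*d)) big_addn addKn.
under eq_bigr => i _ do rewrite (addnC _ (q*d)) modnMDl.
rewrite big_mkord (bigD1 (Ordinal ht)) //= modn_small // eqxx big1 ?addn0 ?addn1 //.
move=> i hi; rewrite modn_small //; case: eqP => // e; case/eqP: hi; exact: val_inj.
Qed.

Lemma cnt_blk N L J d t q : 0 < d -> 0 < q -> L = q * d -> t < d -> J.+1 * L <= N ->
  \sum_(0 <= m < N) ((m %/ L == J) && (m %% d == t) : nat) = q.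
Proof.
move=> hd hq hL ht hN.
have hL0 : 0 < L by rewrite hL muln_gt0 hq.
rewrite mulSn in hN.
rewrite (big_cat_nat (n := J*L)) //=; last by apply: leq_trans hN; rewrite leq_addl.
rewrite (big_cat_nat (m := J*L) (n := L + J*L)) //= ?leq_addl //.
rewrite big_nat_cond big1 ?add0n; last first.
  move=> m /andP[/andP[_ hm] _].
  by rewrite -(ltn_divLR _ _ hL0) in hm; rewrite (ltn_eqF hm).
rewrite [X in _ + X]big_nat_cond [X in _ + X]big1 ?addn0; last first.
  move=> m /andP[/andP[hm _] _].
  have : J.+1 <= m %/ L by rewrite leq_divRL // mulSn.
  by case: eqP => // ->; rewrite ltnn.
rewrite -{1}(add0n (J*L)) big_addn addnK big_nat_cond.
rewrite (eq_bigr (fun i => (i %% d == t) : nat)); last first.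
  move=> i /andP[/andP[_ hi] _].
  rewrite divnDMl // divn_small // add0n eqxx /=.
  by rewrite hL mulnA addnC modnMDl.
by rewrite -big_nat_cond hL cnt_mod.
Qed.

Local Open Scope ring_scope.
Lemma SmxE (p : pattern) i j :
  Smx p i j = (((i %/ pd p %/ pb p == j %/ pd p %/ pc p) && (i %% pd p == j %% pd p))%N : nat)%:R.
Proof. by rewrite /Smx !mxE /= mulr1 -natrM mulnb. Qed.

Theorem proposition4p5 (p1 p2 : pattern)
  (hp1 : pattern_pos p1) (hp2 : pattern_pos p2) (hch : chainable p1 p2)
  (eI : (pa p2 * pb p2 * pd p2 = pa p1 * pc p1 * pd p1)%N)
  (eR : (pa (pchain p1 p2) * pb (pchain p1 p2) * pd (pchain p1 p2)
         = pa p1 * pb p1 * pd p1)%N)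
  (eC : (pa (pchain p1 p2) * pc (pchain p1 p2) * pd (pchain p1 p2)
         = pa p2 * pc p2 * pd p2)%N) :
  Smx p1 *m castmx (eI, erefl) (Smx p2)
  = castmx (eR, eC) ((rval p1 p2)%:R *: Smx (pchain p1 p2)).
Proof.
apply/matrixP => -[r hr] -[s hs].
rewrite [RHS]castmxE [RHS]mxE SmxE [LHS]mxE.
under eq_bigr => j _ do rewrite castmxE !SmxE -natrM.
rewrite -natr_sum -natrM; congr (_ %:R).
move: hp1 hp2 hch eI eR eC hr hs.
case: p1 => a1 b1 c1 d1; case: p2 => a2 b2 c2 d2 /=.
rewrite /pattern_pos /chainable /rval /=.
move=> [ha1 [hb1 [hc1 hd1]]] [ha2 [hb2 [hc2 hd2]]] [h1 h2 h3 h4 h5] _ _ _ hr hs.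
case/dvdnP: h4 => k hk; case/dvdnP: h5 => e he.
have e1 := divnK h1; have e2 := divnK h2.
move: (a1 * c1 %/ a2)%N e1 h3 => r0 e1 h3.
rewrite -h3 in e2.
subst a2 d1.
have hc : c1 = (k * r0)%N.
  apply/eqP; rewrite -(eqn_pmul2l ha1); apply/eqP; rewrite -e1; lia.
have hb : b2 = (r0 * e)%N.
  apply/eqP; rewrite -(eqn_pmul2r hd2); apply/eqP; rewrite -e2; lia.
subst c1 b2.
have hk : (0 < k)%N by move: ha2; rewrite muln_gt0 => /andP[].
have hr0 : (0 < r0)%N by move: hc1; rewrite muln_gt0 => /andP[].
have he0 : (0 < e)%N by move: hd1; rewrite muln_gt0 => /andP[].
clear h1 h2 e1 e2 h3.
have hmod : forall x, (x %% d2 = x %% (e * d2) %% d2)%N.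
  by move=> x; rewrite modn_dvdm // dvdn_mull.
set I := (r %/ (e * d2) %/ b1)%N.
set t := (r %% (e * d2))%N.
set J := (s %/ d2 %/ c2)%N.
set L := (r0 * (e * d2))%N.
set C := ((I == J %/ k) && (t %% d2 == s %% d2))%N.
rewrite (eq_bigr (fun i : 'I__ => C * ((i %/ L == J) && (i %% (e * d2) == t)))%N); last first.
  move=> i _.
  have E1 : (i %/ (e * d2) %/ (k * r0) = i %/ L %/ k)%N.
    by rewrite -!divnMA /L; f_equal; lia.
  have E2 : (i %/ d2 %/ (r0 * e) = i %/ L)%N.
    by rewrite -!divnMA /L; f_equal; lia.
  rewrite E1 E2 (hmod i) -/t.
  case: (eqVneq (i %/ L)%N J) => [->|ne]; last by rewrite /= !muln0.
  case: (eqVneq (i %% (e * d2))%N t) => [->|ne].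
    by rewrite /C /= andbT mulnb muln1.
  by rewrite andbF /= mul0n muln0.
rewrite -big_distrr /=.
rewrite -(big_mkord xpredT (fun i => (((i %/ L == J) && (i %% (e * d2) == t))%N : nat))).
rewrite (@cnt_blk _ L J (e * d2) t r0) //; last 2 first.
- by rewrite ltn_mod.
- have hJ : (J < k * a1)%N by rewrite /J -divnMA ltn_divLR ?muln_gt0 ?hd2 //; lia.
  have : (J.+1 * L <= k * a1 * L)%N by rewrite leq_mul2r hJ orbT.
  move=> /leq_trans; apply; rewrite /L; lia.
rewrite mulnC; congr (_ * _)%N.
have -> : (b1 * (e * d2) %/ d2 = b1 * e)%N by rewrite mulnA mulnK.
have -> : (k * a1 * c2 %/ a1 = k * c2)%N by rewrite mulnAC mulnK.
rewrite (hmod r) -/t /C; congr (_ && _); congr (_ == _).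
  by rewrite /I -!divnMA; f_equal; lia.
by rewrite /J -!divnMA; f_equal; lia.
Qed.
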